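(* Let $X$ be a non-empty finite set and $\mathcal{P}$ a partition of $X$ with distinct block sizes $l_1<\cdots<l_r$. Let $U$ be a set containing one element of $\mathcal{B}_i$ for each $i\le r-1$, and one element of $\mathcal{C}_i$ for each $i\in\{1,\ldots,r\}$ such that either $i=1$ and $l_1\ge 2$, or $i\ge 2$ and $l_i-l_{i-1}\ge 2$. Then $\Sigma(X,\mathcal{P})$ is generated as a semigroup by $S(X,\mathcal{P})\cup U$.
   Context: $T(X,\mathcal{P})$ is the semigroup (under composition) of maps $f:X\to X$ mapping each block of $\mathcal{P}$ into some block; $S(X,\mathcal{P})$ is its group of units; $\Sigma(X,\mathcal{P})$ is the set of $f\in T(X,\mathcal{P})$ whose image intersects every block. For $i\le r-1$, $\mathcal{B}_i$ is the set of $f\in\Sigma(X,\mathcal{P})$ for which there are blocks $P_j,P_{j'},P_k,P_{k'}$ (possibly $j=j'$ or $k=k'$) with $|P_j|=|P_{j'}|=l_i$, $|P_k|=|P_{k'}|=l_{i+1}$, such that $f$ maps $P_j$ injectively into $P_k$, maps $P_{k'}$ onto $P_{j'}$, and maps every other block bijectively onto a block of the same size. For $i\le r$, $\mathcal{C}_i$ is the set of $f\in\Sigma(X,\mathcal{P})$ mapping each block into a block of the same size, such that one block of size $l_i$ has image of size $l_i-1$ and all other blocks are mapped injectively. *)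

(* Defs.v *)
From mathcomp Require Import all_boot.
Set Implicit Arguments. Unset Strict Implicit. Unset Printing Implicit Defensive.

Section Defs.
Variable X : finType.
Implicit Types (P : {set {set X}}) (f g : {ffun X -> X}).

Definition fcomp f g : {ffun X -> X} := [ffun x => f (g x)].
Definition fid : {ffun X -> X} := [ffun x => x].

(* the distinct block sizes, in increasing order: l_1 < ... < l_r is
   (sizes P)`_0 < ... < (sizes P)`_(r-1), r = size (sizes P) *)
Definition sizes P : seq nat := sort leq (undup [seq #|B| | B : {set X} in P]).
Definition l P (i : nat) : nat := nth 0 (sizes P) i.
Definition nsizes P : nat := size (sizes P).

Definition inT P f : Prop :=
  forall A, A \in P -> exists2 B, B \in P & f @: A \subset B.

Definition inS P f : Prop :=
  inT P f /\ exists g, [/\ inT P g, fcomp f g = fid & fcomp g f = fid].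

Definition inSigma P f : Prop :=
  inT P f /\ forall B, B \in P -> (f @: [set: X]) :&: B != set0.

(* B_i (0-indexed: sizes l P i and l P i.+1) *)
Definition inB P i f : Prop :=
  inSigma P f /\
  exists Pj Pj' Pk Pk',
    [/\ [/\ Pj \in P, Pj' \in P, Pk \in P & Pk' \in P],
        [/\ #|Pj| = l P i, #|Pj'| = l P i, #|Pk| = l P i.+1 & #|Pk'| = l P i.+1],
        {in Pj &, injective f} /\ f @: Pj \subset Pk,
        f @: Pk' = Pj' &
        forall B, B \in P -> B != Pj -> B != Pk' ->
          exists2 C, C \in P &
            [/\ #|C| = #|B|, f @: B = C & {in B &, injective f}]].

(* C_i (0-indexed: size l P i) *)
Definition inC P i f : Prop :=
  inSigma P f /\
  (forall B, B \in P -> exists2 C, C \in P & #|C| = #|B| /\ f @: B \subset C) /\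
  exists2 B0, B0 \in P &
    [/\ #|B0| = l P i, #|f @: B0| = (l P i).-1 &
        forall B, B \in P -> B != B0 -> {in B &, injective f}].

(* condition for C_i to be needed (0-indexed version of
   "i = 1 and l_1 >= 2, or i >= 2 and l_i - l_{i-1} >= 2") *)
Definition Cneeded P i : bool :=
  if i is j.+1 then 2 <= l P i - l P j else 2 <= l P 0.

Inductive gen (G : {ffun X -> X} -> Prop) : {ffun X -> X} -> Prop :=
| gen_base f : G f -> gen G f
| gen_comp f g : gen G f -> gen G g -> gen G (fcomp f g).

End Defs.

(* Main.v *)
Require Import Defs.
From mathcomp Require Import all_boot zify.
Set Implicit Arguments. Unset Strict Implicit. Unset Printing Implicit Defensive.


Section Basics.
Variable X : finType.
Variable P : {set {set X}}.
Hypothesis hP : partition P [set: X].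
Local Notation blk := (pblock P).
Implicit Types (f g h : {ffun X -> X}).

Lemma tiP : trivIset P. Proof. exact: partition_trivIset hP. Qed.
Lemma covP x : x \in cover P. Proof. by rewrite (cover_partition hP) inE. Qed.
Lemma blkP x : x \in blk x. Proof. by rewrite mem_pblock covP. Qed.
Lemma blk_in x : blk x \in P. Proof. exact/pblock_mem/covP. Qed.
Lemma blk_def A x : A \in P -> x \in A -> blk x = A.
Proof. exact: def_pblock tiP. Qed.
Lemma blk_same x y : y \in blk x -> blk y = blk x.
Proof. exact: same_pblock tiP. Qed.
Lemma blk_eq x y : (blk x == blk y) = (y \in blk x).
Proof. exact: eq_pblock tiP (covP x). Qed.
Lemma blk_ne0 A : A \in P -> exists x, x \in A.
Proof. by move=> PA; apply/set0Pn; exact: partition_neq0 hP PA. Qed.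

Definition tT (f : {ffun X -> X}) := forall x y, y \in blk x -> f y \in blk (f x).

Lemma inT_P f : inT P f <-> tT f.
Proof.
split.
  move=> hf x y yx; have [B PB sB] := hf _ (blk_in x).
  have fx : f x \in B by apply: (subsetP sB); apply: imset_f; exact: blkP.
  have fy : f y \in B by apply: (subsetP sB); apply: imset_f.
  by rewrite (blk_def PB fx).
move=> hf A PA; have [a aA] := blk_ne0 PA.
exists (blk (f a)); first exact: blk_in.
apply/subsetP=> _ /imsetP[y yA ->]; apply: hf; by rewrite (blk_def PA aA).
Qed.

Definition tSig (f : {ffun X -> X}) := tT f /\ forall B, B \in P -> exists x, f x \in B.

Lemma inSigma_P f : inSigma P f <-> tSig f.
Proof.
rewrite /inSigma /tSig; split=> -[h1 h2]; (split; first by apply/inT_P) => B PB.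
  have /set0Pn[y /setIP[/imsetP[x _ ->] fxB]] := h2 B PB; by exists x.
have [x fx] := h2 B PB; apply/set0Pn; exists (f x); rewrite inE fx andbT.
exact: imset_f.
Qed.

Lemma fcompE f g x : fcomp f g x = f (g x). Proof. by rewrite ffunE. Qed.
Lemma fidE x : fid X x = x. Proof. by rewrite ffunE. Qed.

Lemma tT_comp f g : tT f -> tT g -> tT (fcomp f g).
Proof. by move=> hf hg x y yx; rewrite !fcompE; apply/hf/hg. Qed.

Lemma tSig_comp f g : tSig f -> tSig g -> tSig (fcomp f g).
Proof.
move=> [hf sf] [hg sg]; split; first exact: tT_comp.
move=> B PB; have [y fy] := sf B PB.
have [x gx] := sg _ (blk_in y).
exists x; rewrite fcompE.
have := hf y (g x); rewrite -(blk_same gx) blkP => /(_ isT) h.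
by rewrite -(blk_def PB fy); rewrite -(blk_same h) blkP.
Qed.

Lemma sig_inj f : tSig f -> forall x y, blk (f x) = blk (f y) -> blk x = blk y.
Proof.
move=> [hT hS] x y exy.
pose phi (B : {set X}) := blk (f (odflt x [pick z in B])).
have phiE w : phi (blk w) = blk (f w).
  rewrite /phi; case: pickP => [z zB|none] /=; last by have := none w; rewrite blkP.
  exact: blk_same (hT _ _ zB).
have eP : phi @: P = P.
  apply/setP=> D; apply/imsetP/idP => [[B PB ->]|PD].
    by rewrite /phi blk_in.
  have [w fw] := hS D PD; exists (blk w); first exact: blk_in.
  by rewrite phiE (blk_def PD fw).
have /imset_injP injphi : #|phi @: P| == #|P| by rewrite eP.
by apply: injphi; rewrite ?blk_in // !phiE.
Qed.

End Basics.


Section Seqs.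
Variable X : finType.

Lemma seq_bij (sU sV : seq X) u0 v0 : uniq sU -> uniq sV -> size sU <= size sV ->
  u0 \in sU ->
  [/\ forall x, x \in sU -> nth v0 sV (index x sU) \in sV,
      forall y, y \in sV -> nth u0 sU (index y sV) \in sU &
      forall x, x \in sU -> nth u0 sU (index (nth v0 sV (index x sU)) sV) = x].
Proof.
move=> uU uV le u0U; split.
- move=> x xU; apply: mem_nth; apply: leq_trans le; by rewrite index_mem.
- move=> y yV; case: (ltnP (index y sV) (size sU)) => h; first exact: mem_nth.
  by rewrite nth_default.
- move=> x xU; rewrite index_uniq //; first exact: nth_index.
  apply: leq_trans le; by rewrite index_mem.
Qed.

Lemma seq_bij2 (sU sV : seq X) u0 v0 : uniq sU -> uniq sV -> size sU = size sV ->
  u0 \in sU -> v0 \in sV ->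
  let i x := nth v0 sV (index x sU) in let r y := nth u0 sU (index y sV) in
  [/\ forall x, x \in sU -> i x \in sV, forall y, y \in sV -> r y \in sU,
      forall x, x \in sU -> r (i x) = x & forall y, y \in sV -> i (r y) = y].
Proof.
move=> uU uV e u0U v0V /=.
have [h1 h2 h3] := seq_bij v0 uU uV (eq_leq e) u0U.
have [h1' h2' h3'] := seq_bij u0 uV uU (eq_leq (esym e)) v0V.
by split.
Qed.

Lemma set_bij (U V : {set X}) : #|U| = #|V| -> (exists u0, u0 \in U) ->
  exists i r : X -> X, [/\ forall x, x \in U -> i x \in V, forall y, y \in V -> r y \in U,
      forall x, x \in U -> r (i x) = x & forall y, y \in V -> i (r y) = y].
Proof.
move=> e [u0 u0U].
have v0V : exists v0, v0 \in V.
  by apply/set0Pn; rewrite -card_gt0 -e card_gt0; apply/set0Pn; exists u0.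
case: v0V => v0 v0V.
have := @seq_bij2 (enum U) (enum V) u0 v0 (enum_uniq _) (enum_uniq _).
rewrite -!cardE e => /(_ erefl); rewrite !mem_enum => /(_ u0U v0V) [h1 h2 h3 h4].
exists (fun x => nth v0 (enum V) (index x (enum U))), (fun y => nth u0 (enum U) (index y (enum V))); split => [x|y|x|y] H; [rewrite -mem_enum; apply: h1|rewrite -mem_enum; apply: h2|apply: h3|apply: h4]; by rewrite mem_enum.
Qed.

Lemma set_sec (U V : {set X}) : #|U| <= #|V| -> (exists u0, u0 \in U) ->
  exists i r : X -> X, [/\ forall x, x \in U -> i x \in V, forall y, y \in V -> r y \in U
      & forall x, x \in U -> r (i x) = x].
Proof.
move=> le [u0 u0U] .
have := @seq_bij (enum U) (enum V) u0 u0 (enum_uniq _) (enum_uniq _).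
rewrite -!cardE mem_enum => /(_ le u0U) [h1 h2 h3].
exists (fun x => nth u0 (enum V) (index x (enum U))), (fun y => nth u0 (enum U) (index y (enum V))); split => [x|y|x] H; [rewrite -mem_enum; apply: h1|rewrite -mem_enum; apply: h2|apply: h3]; by rewrite mem_enum.
Qed.

Lemma set_bij2 (U V : {set X}) z w p q : #|U| = #|V| -> z \in U -> w \in U -> z != w ->
  p \in V -> q \in V -> p != q ->
  exists i r : X -> X, [/\ forall x, x \in U -> i x \in V, forall y, y \in V -> r y \in U,
      forall x, x \in U -> r (i x) = x, forall y, y \in V -> i (r y) = y &
      i z = p /\ i w = q].
Proof.
move=> e zU wU zw pV qV pq.
pose sU := z :: w :: enum (U :\ z :\ w); pose sV := p :: q :: enum (V :\ p :\ q).
have memU x : (x \in sU) = (x \in U).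
  rewrite !inE mem_enum !inE; case: (x =P z) => [->|_]; first by rewrite zU.
  by case: (x =P w) => [->|]; rewrite ?wU.
have memV x : (x \in sV) = (x \in V).
  rewrite !inE mem_enum !inE; case: (x =P p) => [->|_]; first by rewrite pV.
  by case: (x =P q) => [->|]; rewrite ?qV.
have uU : uniq sU by rewrite /= enum_uniq !mem_enum !inE !eqxx /= (negbTE zw) /= mem_enum !inE eqxx /= andbF.
have uV : uniq sV by rewrite /= enum_uniq !mem_enum !inE !eqxx /= (negbTE pq) /= mem_enum !inE eqxx /= andbF.
have sz : size sU = size sV.
  rewrite /= -!cardE.
  have cU : #|U| = (#|U :\ z :\ w|).+2.
    by rewrite (cardsD1 z U) (cardsD1 w (U :\ z)) !inE zU wU eq_sym zw.
  have cV : #|V| = (#|V :\ p :\ q|).+2.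
    by rewrite (cardsD1 p V) (cardsD1 q (V :\ p)) !inE pV qV eq_sym pq.
  by move: e; rewrite cU cV => -[->].
have := @seq_bij2 sU sV z p uU uV sz.
rewrite !memU !memV => /(_ zU pV) [h1 h2 h3 h4].
exists (fun x => nth p sV (index x sU)), (fun y => nth z sU (index y sV)).
split => [x H|y H|x H|y H|]; [rewrite -memV; apply: h1|rewrite -memU; apply: h2|apply: h3|apply: h4|]; rewrite ?memU ?memV //.
by rewrite /= !eqxx (negbTE zw).
Qed.
End Seqs.


Section Sizes.
Variable X : finType.
Variable P : {set {set X}}.

Lemma sizes_sorted : sorted ltn (sizes P).
Proof.
rewrite ltn_sorted_uniq_leq sort_uniq undup_uniq /=.
apply: sort_sorted; exact: leq_total.
Qed.

Lemma sizes_mem A : A \in P -> #|A| \in sizes P.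
Proof. by move=> PA; rewrite mem_sort mem_undup; apply: map_f; rewrite mem_enum. Qed.

Lemma sizes_ex i : i < nsizes P -> exists2 A, A \in P & #|A| = l P i.
Proof.
move=> hi; have : l P i \in sizes P by exact: mem_nth.
rewrite mem_sort mem_undup => /mapP[A]; rewrite mem_enum => PA ->; by exists A.
Qed.

Lemma sizes_lt i j : i < j -> j < nsizes P -> l P i < l P j.
Proof.
move=> ij jn; apply: (sorted_ltn_nth ltn_trans 0 sizes_sorted); rewrite ?inE //.
exact: ltn_trans jn.
Qed.

Lemma sizes_idx A : A \in P -> index #|A| (sizes P) < nsizes P /\ l P (index #|A| (sizes P)) = #|A|.
Proof.
move=> PA; have m := sizes_mem PA; split; first by rewrite index_mem.
exact: nth_index.
Qed.

Lemma sizes_mono i j : i < nsizes P -> j < nsizes P -> l P i <= l P j -> i <= j.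
Proof.
move=> hi hj le; case: (leqP i j) => // ji.
have := sizes_lt ji hi; lia.
Qed.
End Sizes.


Section GenS.
Variable X : finType.
Variable P : {set {set X}}.
Hypothesis hP : partition P [set: X].
Local Notation blk := (pblock P).
Implicit Types (f g h s : {ffun X -> X}).
Variables b c : nat -> {ffun X -> X}.
Hypothesis hb : forall i, i.+1 < nsizes P -> inB P i (b i).
Hypothesis hc : forall i, i < nsizes P -> Cneeded P i -> inC P i (c i).

Definition GS g := inS P g \/ (exists2 i, i.+1 < nsizes P & g = b i)
                  \/ (exists i, [/\ i < nsizes P, Cneeded P i & g = c i]).
Local Notation Gen := (gen GS).

Lemma GenS g : inS P g -> Gen g. Proof. by move=> h; apply: gen_base; left. Qed.
Lemma GenC f g : Gen f -> Gen g -> Gen (fcomp f g). Proof. exact: gen_comp. Qed.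

Lemma inS_sig g : inS P g -> tSig P g.
Proof.
move=> [/(inT_P hP) hT [g' [_ e1 _]]]; split=> // B PB.
have [y yB] := blk_ne0 hP PB; exists (g' y).
by rewrite -fcompE e1 fidE.
Qed.

Lemma Gen_sig f : Gen f -> tSig P f.
Proof.
elim=> [g [hg|[[i hi ->]|[i [hi hn ->]]]]|f' g' _ h1 _ h2]; last exact: tSig_comp.
- exact: inS_sig.
- by have [/(inSigma_P hP) ? _] := hb hi.
- by have [/(inSigma_P hP) ? _] := hc hi hn.
Qed.

Lemma inS_inv s s' : tT P s -> tT P s' -> fcomp s s' = fid X -> fcomp s' s = fid X -> inS P s.
Proof.
move=> h1 h2 e1 e2; split; first exact/(inT_P hP).
by exists s'; split=> //; exact/(inT_P hP).
Qed.

Lemma inS_invex s : inS P s -> exists s', [/\ inS P s', fcomp s s' = fid X & fcomp s' s = fid X].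
Proof.
move=> [h1 [s' [h2 e1 e2]]]; exists s'; split=> //.
by apply: (@inS_inv s' s); rewrite //; apply/(inT_P hP).
Qed.

Lemma inS_bij s : injective s -> (forall A, A \in P -> s @: A \in P) -> inS P s.
Proof.
move=> sinj hA; pose g := [ffun y => invF sinj y].
have gE y : g y = invF sinj y by rewrite ffunE.
have imB x : s @: blk x = blk (s x).
  by apply/esym/(blk_def hP (hA _ (blk_in hP x))); apply: imset_f; exact: blkP.
apply: (@inS_inv s g).
- move=> x y yx; rewrite -imB; exact: imset_f.
- move=> x y yx; rewrite !gE.
  have : y \in s @: blk (invF sinj x) by rewrite imB f_invF.
  case/imsetP => a aB ey; by rewrite ey invF_f.
- by apply/ffunP=> x; rewrite fcompE gE f_invF fidE.
- by apply/ffunP=> x; rewrite fcompE gE invF_f fidE.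
Qed.

Definition tH h := forall x, h x \in blk x.
Lemma tH_sig h : tH h -> tSig P h.
Proof.
move=> hh; split.
  move=> x y yx; rewrite (blk_same hP (hh x)) -(blk_same hP yx); exact: hh.
move=> B PB; have [x xB] := blk_ne0 hP PB; exists x; by rewrite -(blk_def hP PB xB).
Qed.

Definition eps (z w : X) : {ffun X -> X} := [ffun x => if x == z then w else x].

Section HGen.
Hypothesis hE : forall z w, w \in blk z -> z != w -> Gen (eps z w).

Lemma H_gen h : tH h -> Gen h.
Proof.
move=> hh.
have [n] := ubnP (#|X| - #|h @: [set: X]|); elim: n h hh => // n IH h hh hn.
case: (boolP (injectiveb h)) => [/injectiveP hinj | /injectivePn [x [y xy hxy]]].
  apply: GenS; apply: inS_bij => // A PA.
  suff -> : h @: A = A by [].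
  apply/eqP; rewrite eqEcard card_imset // leqnn andbT.
  apply/subsetP=> _ /imsetP[a aA ->]; by rewrite -(blk_def hP PA aA).
set C := blk x.
have yC : y \in C by rewrite /C -(blk_same hP (hh x)) hxy (blk_same hP (hh y)) blkP.
have xC : x \in C := blkP hP x.
have : ~~ (C \subset h @: C).
  apply/negP => sub.
  have := subset_leq_card sub.
  have -> : h @: C = h @: (C :\ y).
    apply/setP=> v; apply/imsetP/imsetP => [[u uC ->]|[u]]; last first.
      by rewrite inE => /andP[_ ?] ->; exists u.
    case: (u =P y) => [->|/eqP uy]; first by exists x; [rewrite !inE xy xC | rewrite hxy].
    by exists u; rewrite // !inE uy.
  have := leq_imset_card h (C :\ y); rewrite (cardsD1 y C) yC; lia.
case/subsetPn => z zC zn.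
have zim : z \notin h @: [set: X].
  apply/imsetP => -[u _ ezu]; apply: (negP zn); apply/imsetP; exists u => //.
  have e1 : blk (h u) = blk x by apply: (blk_same hP); rewrite -ezu.
  have e2 := blk_same hP (hh u).
  by rewrite /C -(blk_eq hP) -e2 e1.
pose h' := [ffun u => if u == y then z else h u].
have hEq : h = fcomp (eps z (h x)) h'.
  apply/ffunP=> u; rewrite fcompE !ffunE; case: (u =P y) => [->|_]; first by rewrite eqxx hxy.
  case: (h u =P z) => [ehu|//]; by case/negP: zim; rewrite -ehu imset_f ?inE.
have hh' : tH h'.
  move=> u; rewrite ffunE; case: (u =P y) => [->|_]; last exact: hh.
  by rewrite (blk_same hP yC).
have card' : #|h' @: [set: X]| = (#|h @: [set: X]|).+1.
  have -> : h' @: [set: X] = z |: h @: [set: X].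
    apply/setP=> v; rewrite !inE; apply/imsetP/idP => [[u _ ->]|].
      rewrite ffunE; case: (u =P y) => _; first by rewrite eqxx.
      by rewrite imset_f ?inE ?orbT.
    case/orP => [/eqP ->|/imsetP[u _ ->]]; first by exists y; rewrite ?inE ?ffunE ?eqxx.
    case: (u =P y) => [->|/eqP uy].
      by exists x; rewrite ?inE // ffunE (negbTE xy) hxy.
    by exists u; rewrite ?inE // ffunE (negbTE uy).
  by rewrite cardsU1 zim.
rewrite hEq; apply: GenC.
  apply: hE.
    by rewrite (blk_same hP zC); exact: hh.
  by apply/eqP => e; case/negP: zim; rewrite e imset_f ?inE.
apply: IH hh' _.
have := max_card (h' @: [set: X]); rewrite card'; lia.
Qed.
End HGen.
End GenS.


Section Swaps.
Variable X : finType.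
Variable P : {set {set X}}.
Hypothesis hP : partition P [set: X].
Local Notation blk := (pblock P).
Implicit Types (f g h s : {ffun X -> X}).
Variables b c : nat -> {ffun X -> X}.
Hypothesis hb : forall i, i.+1 < nsizes P -> inB P i (b i).
Hypothesis hc : forall i, i < nsizes P -> Cneeded P i -> inC P i (c i).
Local Notation Gen := (gen (GS P b c)).

Lemma blk_disj A B u : A \in P -> B \in P -> A != B -> u \in A -> u \notin B.
Proof.
move=> PA PB AB uA; apply/negP => uB.
by move: AB; rewrite -(blk_def hP PA uA) -(blk_def hP PB uB) eqxx.
Qed.

Lemma blk_memE A u y : A \in P -> u \in A -> (y \in blk u) = (y \in A).
Proof. by move=> PA uA; rewrite (blk_def hP PA uA). Qed.

Lemma blk_neq x (A : {set X}) : x \notin A -> blk x != A.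
Proof. by apply: contraNneq => <-; rewrite blkP. Qed.

Lemma blk_memS (A : {set X}) x y : A \in P -> y \in blk x -> (y \in A) = (x \in A).
Proof.
move=> PA yx; apply/idP/idP => h.
  by rewrite -(blk_def hP PA h) (blk_same hP yx) blkP.
by rewrite -(blk_def hP PA h).
Qed.

Definition swapf (A B : {set X}) (i r : X -> X) : {ffun X -> X} :=
  [ffun u => if u \in A then i u else if u \in B then r u else u].

Definition SW (A B : {set X}) w :=
  [/\ forall u, u \in A -> w u \in B, {in A &, injective w}, w @: B = A &
      forall u, u \notin A -> u \notin B -> w u = u].

Definition SWP (A B : {set X}) := exists2 w, Gen w & SW A B w.

Lemma size_neq (A B : {set X}) : #|A| != #|B| -> A != B.
Proof. by apply: contraNneq => ->. Qed.

Lemma base_swap i : i.+1 < nsizes P ->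
  exists A, exists C, [/\ A \in P, C \in P, #|A| = l P i, #|C| = l P i.+1 & SWP A C].
Proof.
move=> hi.
have [/(inSigma_P hP) bsig [Pj [Pj' [Pk [Pk' [[hPj hPj' hPk hPk']
   [sj sj' sk sk'] [binj bsub] bim hother]]]]]] := hb hi.
set bb := b i in bsig binj bsub bim hother *.
have lt := sizes_lt (ltnSn i) hi.
have nPjPk : Pj != Pk by apply: size_neq; rewrite sj sk neq_ltn lt.
have nPjPk' : Pj != Pk' by apply: size_neq; rewrite sj sk' neq_ltn lt.
have nPj'Pk : Pj' != Pk by apply: size_neq; rewrite sj' sk neq_ltn lt.
have nPj'Pk' : Pj' != Pk' by apply: size_neq; rewrite sj' sk' neq_ltn lt.
have [pj pjP] := blk_ne0 hP hPj.
have [pk pkP] := blk_ne0 hP hPk.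
have [pk' pk'P] := blk_ne0 hP hPk'.
have [pj' pj'P] := blk_ne0 hP hPj'.
have bsubP u : u \in Pj -> bb u \in Pk by move=> uP; apply: (subsetP bsub); exact: imset_f.
have bimP u : u \in Pk' -> bb u \in Pj' by move=> uP; rewrite -bim; exact: imset_f.
have F1 x : x \notin Pj -> x \notin Pk' -> bb x \notin Pk /\ bb x \notin Pj'.
  move=> xj xk'; split; apply/negP => h.
    have e : blk (bb x) = blk (bb pj) by rewrite (blk_def hP hPk h) (blk_def hP hPk (bsubP _ pjP)).
    by move: xj; rewrite -(blk_memE x hPj pjP) -(sig_inj hP bsig e) blkP.
  have e : blk (bb x) = blk (bb pk') by rewrite (blk_def hP hPj' h) (blk_def hP hPj' (bimP _ pk'P)).
  by move: xk'; rewrite -(blk_memE x hPk' pk'P) -(sig_inj hP bsig e) blkP.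
have F2 y : y \notin Pk -> y \notin Pj' -> exists x, bb x = y.
  move=> yk yj'; have [x0 hx0] := bsig.2 _ (blk_in hP y).
  have x0j : x0 \notin Pj.
    apply/negP => h; move: yk; rewrite -(blk_memE y hPk (bsubP _ h)).
    by rewrite (blk_same hP hx0) blkP.
  have x0k' : x0 \notin Pk'.
    apply/negP => h; move: yj'; rewrite -(blk_memE y hPj' (bimP _ h)).
    by rewrite (blk_same hP hx0) blkP.
  have [C PC [_ eC _]] := hother _ (blk_in hP x0)
     (blk_neq x0j) (blk_neq x0k').
  have : y \in C.
    have bC : bb x0 \in C by rewrite -eC; apply: imset_f; exact: blkP.
    by rewrite -(blk_def hP PC bC) (blk_same hP hx0) blkP.
  by rewrite -eC => /imsetP[x _ ->]; exists x.
have F3 x x' : x \notin Pj -> x \notin Pk' -> bb x' = bb x -> x' = x.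
  move=> xj xk' e.
  have [n1 n2] := F1 x xj xk'.
  have x'j : x' \notin Pj by apply/negP => h; move: n1; rewrite -e bsubP.
  have x'k : x' \notin Pk' by apply/negP => h; move: n2; rewrite -e bimP.
  have eb : blk x' = blk x by apply: (sig_inj hP bsig); rewrite e.
  have [C PC [_ _ inj]] := hother _ (blk_in hP x)
     (blk_neq xj) (blk_neq xk').
  by apply: inj => //; [rewrite -eb blkP | rewrite blkP].
have [be1 [be1' [b1A b1B b1C b1D]]] := @set_bij _ Pk Pk' (etrans sk (esym sk')) (ex_intro _ pk pkP).
have [be2 [be2' [b2A b2B b2C b2D]]] := @set_bij _ Pj' Pj (etrans sj' (esym sj)) (ex_intro _ pj' pj'P).
have dis (A B : {set X}) u : A \in P -> B \in P -> A != B -> u \in A -> u \notin B.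
  exact: blk_disj.
pose g := [ffun y => if y \in Pk then be1 y else if y \in Pj' then be2 y
                     else odflt y [pick x | bb x == y]].
pose g' := [ffun x => if x \in Pk' then be1' x else if x \in Pj then be2' x else bb x].
have PK y : y \notin Pk -> y \notin Pj' -> exists2 x, [pick x | bb x == y] = Some x & bb x = y.
  move=> yk yj; case: pickP => [x /eqP e|none]; first by exists x.
  by have [x e] := F2 y yk yj; have := none x; rewrite e eqxx.
have gE y : y \notin Pk -> y \notin Pj' -> exists2 x, g y = x & bb x = y.
  move=> yk yj; have [x ex bx] := PK y yk yj; exists x => //.
  by rewrite ffunE (negbTE yk) (negbTE yj) ex.
have g'g y : g' (g y) = y.
  case: (boolP (y \in Pk)) => yk.
    by rewrite [g y]ffunE yk ffunE b1A // b1C.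
  case: (boolP (y \in Pj')) => yj.
    rewrite [g y]ffunE (negbTE yk) yj ffunE.
    have h2 := b2A _ yj.
    by rewrite (negbTE (dis _ _ _ hPj hPk' nPjPk' h2)) h2 b2C.
  have [x -> bx] := gE y yk yj.
  have xk : x \notin Pk' by apply/negP => h; move: yj; rewrite -bx bimP.
  have xj : x \notin Pj by apply/negP => h; move: yk; rewrite -bx bsubP.
  by rewrite ffunE (negbTE xk) (negbTE xj).
have gg' x : g (g' x) = x.
  case: (boolP (x \in Pk')) => xk.
    by rewrite [g' x]ffunE xk ffunE b1B // b1D.
  case: (boolP (x \in Pj)) => xj.
    rewrite [g' x]ffunE (negbTE xk) xj ffunE.
    have h2 := b2B _ xj.
    have nk : be2' x \notin Pk by apply: (dis _ _ _ hPj' hPk nPj'Pk).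
    by rewrite (negbTE nk) h2 b2D.
  have [n1 n2] := F1 x xj xk.
  rewrite [g' x]ffunE (negbTE xk) (negbTE xj).
  have [x' -> bx'] := gE _ n1 n2.
  exact: F3 bx'.
have tg : tT P g.
  move=> x y yx.
  case: (boolP (x \in Pk)) => xk.
    have yk : y \in Pk by rewrite (blk_memS hPk yx).
    rewrite !ffunE xk yk (blk_memE _ hPk' (b1A _ xk)); exact: b1A.
  have yk : y \notin Pk by rewrite (blk_memS hPk yx).
  case: (boolP (x \in Pj')) => xj.
    have yj : y \in Pj' by rewrite (blk_memS hPj' yx).
    rewrite !ffunE (negbTE xk) (negbTE yk) xj yj (blk_memE _ hPj (b2A _ xj)); exact: b2A.
  have yj : y \notin Pj' by rewrite (blk_memS hPj' yx).
  have [x0 -> bx0] := gE x xk xj.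
  have [y0 -> by0] := gE y yk yj.
  have e : blk (bb y0) = blk (bb x0) by rewrite bx0 by0 (blk_same hP yx).
  by rewrite -(sig_inj hP bsig e) blkP.
have tg' : tT P g'.
  move=> x y yx.
  case: (boolP (x \in Pk')) => xk.
    have yk : y \in Pk' by rewrite (blk_memS hPk' yx).
    rewrite !ffunE xk yk (blk_memE _ hPk (b1B _ xk)); exact: b1B.
  have yk : y \notin Pk' by rewrite (blk_memS hPk' yx).
  case: (boolP (x \in Pj)) => xj.
    have yj : y \in Pj by rewrite (blk_memS hPj yx).
    rewrite !ffunE (negbTE xk) (negbTE yk) xj yj (blk_memE _ hPj' (b2B _ xj)); exact: b2B.
  have yj : y \notin Pj by rewrite (blk_memS hPj yx).
  rewrite !ffunE (negbTE xk) (negbTE yk) (negbTE xj) (negbTE yj).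
  exact: bsig.1.
have Sg : inS P g.
  apply: (@inS_inv _ _ hP g g') => //; apply/ffunP => x; by rewrite fcompE fidE.
exists Pj, Pk'; split => //.
exists (fcomp g bb).
  apply: GenC; first exact: GenS.
  by apply: gen_base; right; left; exists i.
split.
- move=> u uj; rewrite fcompE ffunE bsubP //; apply: b1A; exact: bsubP.
- move=> u v uj vj; rewrite !fcompE !ffunE !bsubP // => e.
  apply: binj => //; by rewrite -(b1C _ (bsubP _ uj)) e b1C // bsubP.
- apply/setP => x; apply/imsetP/idP => [[u uk ->]|xj].
    have h := bimP _ uk; rewrite fcompE ffunE (negbTE (dis _ _ _ hPj' hPk nPj'Pk h)) h.
    exact: b2A.
  have := b2B _ xj; rewrite -bim => /imsetP[u uk eu]; exists u => //.
  have h := bimP _ uk.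
  by rewrite fcompE ffunE (negbTE (dis _ _ _ hPj' hPk nPj'Pk h)) h -eu b2D.
- move=> u uj uk; rewrite fcompE -[in RHS](gg' u); congr (g _).
  by rewrite ffunE (negbTE uj) (negbTE uk).
Qed.
End Swaps.


Section E.
Variable X : finType.
Variable P : {set {set X}}.
Hypothesis hP : partition P [set: X].
Local Notation blk := (pblock P).
Implicit Types (f g h s : {ffun X -> X}).
Variables b c : nat -> {ffun X -> X}.
Hypothesis hb : forall i, i.+1 < nsizes P -> inB P i (b i).
Hypothesis hc : forall i, i < nsizes P -> Cneeded P i -> inC P i (c i).
Local Notation Gen := (gen (GS P b c)).

Lemma swapfE (A B : {set X}) (i r : X -> X) u : swapf A B i r u = if u \in A then i u else if u \in B then r u else u.
Proof. by rewrite ffunE. Qed.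

Lemma swapf_T (A B : {set X}) i r : A \in P -> B \in P ->
  (forall u, u \in A -> i u \in B) -> (forall u, u \in B -> r u \in A) -> tT P (swapf A B i r).
Proof.
move=> PA PB hi hr; apply/(inT_P hP) => Y PY.
case: (Y =P A) => [eYA|/eqP nYA].
  subst Y.
  by exists B => //; apply/subsetP => _ /imsetP[u uA ->]; rewrite swapfE uA hi.
case: (Y =P B) => [eYB|/eqP nYB].
  subst Y; exists A => //; apply/subsetP => _ /imsetP[u uB ->].
  have nAB : B != A by [].
  by rewrite swapfE (negbTE (blk_disj hP PB PA nAB uB)) uB hr.
exists Y => //; apply/subsetP => _ /imsetP[u uY ->].
by rewrite swapfE (negbTE (blk_disj hP PY PA nYA uY)) (negbTE (blk_disj hP PY PB nYB uY)).
Qed.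

Lemma swapf_inv (A B : {set X}) i r : A \in P -> B \in P ->
  (forall u, u \in A -> i u \in B) -> (forall u, u \in B -> r u \in A) ->
  (forall u, u \in A -> r (i u) = u) -> (forall u, u \in B -> i (r u) = u) ->
  fcomp (swapf A B i r) (swapf B A r i) = fid X.
Proof.
move=> PA PB hi hr hri hir; apply/ffunP => u; rewrite fcompE fidE.
case: (boolP (u \in B)) => uB; first by rewrite [swapf B A _ _ u]swapfE uB swapfE hr // hir.
case: (boolP (u \in A)) => uA; last by rewrite [swapf B A _ _ u]swapfE (negbTE uB) (negbTE uA) swapfE (negbTE uB) (negbTE uA).
have nAB : A != B by apply: contraNneq uB => <-.
have iB := hi _ uA.
rewrite [swapf B A _ _ u]swapfE (negbTE uB) uA swapfE.
have nBA : B != A by rewrite eq_sym.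
by rewrite (negbTE (blk_disj hP PB PA nBA iB)) iB hri.
Qed.

Lemma swapf_S (A B : {set X}) i r : A \in P -> B \in P ->
  (forall u, u \in A -> i u \in B) -> (forall u, u \in B -> r u \in A) ->
  (forall u, u \in A -> r (i u) = u) -> (forall u, u \in B -> i (r u) = u) ->
  inS P (swapf A B i r).
Proof.
move=> PA PB hi hr hri hir.
apply: (@inS_inv _ _ hP _ (swapf B A r i)); try exact: swapf_T; exact: swapf_inv.
Qed.

Lemma CtoE k B0 : Gen k -> tSig P k ->
  (forall Y, Y \in P -> exists2 Z, Z \in P & #|Z| = #|Y| /\ k @: Y \subset Z) ->
  B0 \in P -> #|k @: B0| = (#|B0|).-1 ->
  (forall Y, Y \in P -> Y != B0 -> {in Y &, injective k}) ->
  forall z w, z != w -> w \in blk z -> #|blk z| = #|B0| -> Gen (eps z w).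
Proof.
move=> kG ksig hZ PB0 ck hinj z w zw wz cz.
have [b0 b0B] := blk_ne0 hP PB0.
have B0pos : 0 < #|B0| by apply/card_gt0P; exists b0.
case: (boolP [exists p, [exists q, [&& p \in B0, q \in B0, p != q & k p == k q]]]); last first.
  move/negP => nc; have : #|k @: B0| = #|B0|.
    apply: card_in_imset => u v uB vB e; apply/eqP/negPn/negP => ne; apply: nc.
    by apply/existsP; exists u; apply/existsP; exists v; rewrite uB vB ne e eqxx.
  lia.
case/existsP => p /existsP[q /and4P[pB qB pq /eqP kpq]].
have [Z PZ [cZ sZ]] := hZ _ PB0.
have : ~~ (Z \subset k @: B0).
  by apply/negP => /subset_leq_card; lia.
case/subsetPn => m mZ mn.
pose kt := [ffun u => if u == p then m else k u].
have ktE u : kt u = if u == p then m else k u by rewrite ffunE.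
have kpZ : k p \in Z by apply: (subsetP sZ); exact: imset_f.
have ktb u : blk (kt u) = blk (k u).
  rewrite ktE; case: (u =P p) => [->|//].
  by rewrite (blk_def hP PZ mZ) (blk_def hP PZ kpZ).
have imB0 : kt @: B0 = m |: k @: B0.
  apply/setP => v; rewrite in_setU1; apply/imsetP/idP => [[u uB ->]|].
    rewrite ktE; case: (u =P p) => _; first by rewrite /= eqxx.
    by rewrite imset_f ?orbT.
  case/orP => [/eqP ->|/imsetP[u uB ->]]; first by exists p; rewrite ?ktE ?eqxx.
  case: (u =P p) => [->|/eqP up].
    by exists q; rewrite // ktE eq_sym (negbTE pq).
  by exists u; rewrite // ktE (negbTE up).
have cB0 : #|kt @: B0| = #|B0| by rewrite imB0 cardsU1 mn ck; lia.
have eZ : kt @: B0 = Z.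
  apply/eqP; rewrite eqEcard cZ cB0 leqnn andbT imB0.
  apply/subsetP => v; rewrite in_setU1 => /orP[/eqP ->//|]; exact: (subsetP sZ).
have injB0 : {in B0 &, injective kt} by apply/imset_injP; rewrite cB0.
have pnY Y u : Y \in P -> Y != B0 -> u \in Y -> u != p.
  move=> PY nY uY; apply/eqP => up; have nB : B0 != Y by rewrite eq_sym.
  move: (blk_disj hP PB0 PY nB pB).
  by rewrite -up uY.
have Skt : inS P kt.
  apply: (inS_bij hP).
    move=> u v e.
    have eb : blk u = blk v by apply: (sig_inj hP ksig); rewrite -!ktb e.
    case: (blk u =P B0) => [eu|/eqP nu].
      by apply: injB0 => //; [rewrite -eu blkP | rewrite -eu eb blkP].
    have uY := blkP hP u; have vY : v \in blk u by rewrite eb blkP.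
    move: e; rewrite !ktE (negbTE (pnY _ _ (blk_in hP u) nu uY)) (negbTE (pnY _ _ (blk_in hP u) nu vY)).
    exact: (hinj _ (blk_in hP u) nu).
  move=> Y PY; case: (Y =P B0) => [->|/eqP nY]; first by rewrite eZ.
  have [ZY PZY [cZY sZY]] := hZ _ PY.
  suff -> : kt @: Y = ZY by [].
  have -> : kt @: Y = k @: Y.
    apply: eq_in_imset => u uY; by rewrite ktE (negbTE (pnY _ _ PY nY uY)).
  by apply/eqP; rewrite eqEcard sZY cZY (card_in_imset (hinj _ PY nY)) leqnn.
have keq : k = fcomp kt (eps p q).
  apply/ffunP => u; rewrite fcompE ktE ffunE.
  case: (u =P p) => [->|/eqP up]; last by rewrite (negbTE up).
  by rewrite eq_sym (negbTE pq) kpq.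
have [kt' [Skt' _ e2]] := inS_invex hP Skt.
have epq : Gen (eps p q).
  have -> : eps p q = fcomp kt' k.
    apply/ffunP => u; by rewrite keq fcompE fcompE -[kt' _]fcompE e2 fidE.
  apply: GenC => //; exact: GenS.
set C := blk z.
have PC : C \in P := blk_in hP z.
have zC : z \in C := blkP hP z.
have [be [be' [h1 h2 h3 h4 [hz hw]]]] := @set_bij2 _ C B0 z w p q cz zC wz zw pB qB pq.
have St := swapf_S PC PB0 h1 h2 h3 h4.
have St' := swapf_S PB0 PC h2 h1 h4 h3.
have -> : eps z w = fcomp (swapf B0 C be' be) (fcomp (eps p q) (swapf C B0 be be')).
  apply/ffunP => u; rewrite !fcompE [eps z w u]ffunE.
  case: (boolP (u \in C)) => uC.
    have bB := h1 _ uC.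
    rewrite [swapf C B0 _ _ u]swapfE uC [eps p q _]ffunE.
    case: (u =P z) => [->|/eqP uz].
      by rewrite hz eqxx swapfE qB -hw h3.
    have bp : be u != p.
      by apply/eqP => e; move/eqP: uz; rewrite -(h3 _ uC) e -hz h3 ?eqxx.
    by rewrite (negbTE bp) swapfE bB h3.
  have uz : u != z by apply: contraNneq uC => ->.
  rewrite (negbTE uz).
  case: (boolP (u \in B0)) => uB.
    have nCB : C != B0 by apply: contraNneq uC => ->.
    have bC := h2 _ uB.
    have bnB := blk_disj hP PC PB0 nCB bC.
    have bp : be' u != p by apply: contraNneq bnB => ->.
    by rewrite [swapf C B0 _ _ u]swapfE (negbTE uC) uB [eps p q _]ffunE (negbTE bp) swapfE (negbTE bnB) bC h4.
  have up : u != p by apply: contraNneq uB => ->.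
  by rewrite [swapf C B0 _ _ u]swapfE (negbTE uC) (negbTE uB) [eps p q u]ffunE (negbTE up) swapfE (negbTE uB) (negbTE uC).
apply: GenC; first exact: GenS.
by apply: GenC => //; exact: GenS.
Qed.
End E.


Section E2.
Variable X : finType.
Variable P : {set {set X}}.
Hypothesis hP : partition P [set: X].
Local Notation blk := (pblock P).
Implicit Types (f g h s : {ffun X -> X}).
Variables b c : nat -> {ffun X -> X}.
Hypothesis hb : forall i, i.+1 < nsizes P -> inB P i (b i).
Hypothesis hc : forall i, i < nsizes P -> Cneeded P i -> inC P i (c i).
Local Notation Gen := (gen (GS P b c)).

Lemma swap_E A C0 : A \in P -> C0 \in P -> #|C0| = #|A|.+1 -> SWP P b c A C0 ->
  forall z w, z != w -> w \in blk z -> #|blk z| = #|C0| -> Gen (eps z w).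
Proof.
move=> PA PC cC [w0 w0G [hA hinjA himC hid]].
have nAC : A != C0 by apply: size_neq; rewrite cC; lia.
have nCA : C0 != A by rewrite eq_sym.
have cwA : #|w0 @: A| = #|A| := card_in_imset hinjA.
case: (boolP [exists p, [exists q, [&& p \in C0, q \in C0, p != q & w0 p == w0 q]]]); last first.
  move/negP => nc; have : #|w0 @: C0| = #|C0|.
    apply: card_in_imset => u v uB vB e; apply/eqP/negPn/negP => ne; apply: nc.
    by apply/existsP; exists u; apply/existsP; exists v; rewrite uB vB ne e eqxx.
  rewrite himC; lia.
case/existsP => p /existsP[q /and4P[pC qC pq /eqP wpq]].
have : ~~ (C0 \subset w0 @: A).
  by apply/negP => /subset_leq_card; lia.
case/subsetPn => m mC mn.
have injCp : {in C0 :\ p &, injective w0}.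
  apply/imset_injP.
  have -> : w0 @: (C0 :\ p) = w0 @: C0.
    apply/setP=> v; apply/imsetP/imsetP => [[u]|[u uC ->]].
      by rewrite inE => /andP[_ ?] ->; exists u.
    case: (u =P p) => [->|/eqP up]; first by exists q; rewrite // !inE eq_sym pq qC.
    by exists u; rewrite // !inE up.
  rewrite himC; apply/eqP; have := cardsD1 p C0; rewrite pC cC; lia.
pose s := [ffun u => if u == m then p else if u == p then m else u].
have sE u : s u = if u == m then p else if u == p then m else u by rewrite ffunE.
have ss u : s (s u) = u.
  rewrite !sE; case: (u =P m) => [->|/eqP um].
    by case: (p =P m) => [->|_]; rewrite ?eqxx.
  case: (u =P p) => [->|/eqP up]; first by rewrite eqxx.
  by rewrite (negbTE um) (negbTE up).
have sC u : u \in C0 -> s u \in C0.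
  by move=> uC; rewrite sE; case: (u == m) => //; case: (u == p).
have sid u : u \notin C0 -> s u = u.
  move=> uC; rewrite sE; case: (u =P m) => [eu|_]; first by move: uC; rewrite eu mC.
  by case: (u =P p) => [eu|//]; move: uC; rewrite eu pC.
have Hs : tH P s.
  move=> u; case: (boolP (u \in C0)) => uC; last by rewrite sid // blkP.
  by rewrite (blk_def hP PC uC); apply: sC.
have Ss : inS P s.
  apply: (@inS_inv _ _ hP s s); try exact: (tH_sig hP Hs).1.
  by apply/ffunP => u; rewrite fcompE ss fidE.
  by apply/ffunP => u; rewrite fcompE ss fidE.
pose k := fcomp w0 (fcomp s w0).
have kG : Gen k by apply: GenC => //; apply: GenC => //; exact: GenS.
have wC u : u \in C0 -> w0 u \in A by move=> uC; rewrite -himC imset_f.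
have AnC u : u \in A -> u \notin C0 := blk_disj hP PA PC nAC.
have CnA u : u \in C0 -> u \notin A := blk_disj hP PC PA nCA.
have kC u : u \in C0 -> k u = w0 (w0 u).
  by move=> uC; rewrite !fcompE sid //; apply: AnC; apply: wC.
have Hk : tH P k.
  move=> u; case: (boolP (u \in A)) => uA.
    rewrite (blk_def hP PA uA) !fcompE; apply: wC; apply: sC; exact: hA.
  case: (boolP (u \in C0)) => uC.
    by rewrite (blk_def hP PC uC) kC // hA // wC.
  by rewrite !fcompE hid // sid // hid // blkP.
apply: (CtoE hP kG (tH_sig hP Hk) _ PC).
- move=> Y PY; exists Y => //; split => //; apply/subsetP => _ /imsetP[u uY ->].
  by have := Hk u; rewrite (blk_def hP PY uY).
- have -> : k @: C0 = w0 @: A.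
    apply/setP => v; apply/imsetP/imsetP => [[u uC ->]|[a aA ->]].
      by exists (w0 u); rewrite ?kC ?wC.
    move: aA; rewrite -himC => /imsetP[u uC ->]; exists u => //; by rewrite kC.
  rewrite cwA cC; lia.
- move=> Y PY nY.
  case: (Y =P A) => [eY|/eqP nYA].
    subst Y => u v uA vA.
    have sp x : x \in A -> s (w0 x) \in C0 :\ p.
      move=> xA; have wx := hA _ xA.
      have wm : w0 x != m by apply: contraNneq mn => <-; exact: imset_f.
      rewrite !inE sC // andbT sE (negbTE wm).
      by case: (w0 x =P p) => [e|/eqP //]; rewrite -e eq_sym.
    rewrite !fcompE => e.
    have e2 := injCp _ _ (sp _ uA) (sp _ vA) e.
    by apply: hinjA => //; rewrite -(ss (w0 u)) e2 ss.
  move=> u v uY vY.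
  have ku x : x \in Y -> k x = x.
    move=> xY; have xA : x \notin A := blk_disj hP PY PA nYA xY.
    have xC : x \notin C0 := blk_disj hP PY PC nY xY.
    by rewrite !fcompE hid // sid // hid.
  by rewrite !ku.
Qed.

Lemma allE z w : z != w -> w \in blk z -> Gen (eps z w).
Proof.
move=> zw wz.
set C := blk z.
have zC : z \in C := blkP hP z.
have PC : C \in P := blk_in hP z.
have c2 : 2 <= #|C|.
  have : [set z; w] \subset C by apply/subsetP => v; rewrite in_set2 => /orP[/eqP->|/eqP->].
  by move/subset_leq_card; rewrite cards2 zw.
have [hi li] := sizes_idx PC.
case: (boolP (Cneeded P (index #|C| (sizes P)))) => hn.
  have [csig [hZ [B0 PB0 [cB0 ck hinj]]]] := hc hi hn.
  apply: (@CtoE _ _ hP b c (c (index #|C| (sizes P))) B0) => //.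
  - by apply: gen_base; right; right; exists (index #|C| (sizes P)).
  - exact/(inSigma_P hP).
  - by rewrite ck cB0.
  - by rewrite cB0 li.
move: hn hi li; rewrite /Cneeded; case: (index #|C| (sizes P)) => [|j] /= hn hi li.
  by move: hn; rewrite li c2.
have lt := sizes_lt (ltnSn j) hi.
have [A [C0 [PA PC0 cA cC0 sw]]] := base_swap hP c hb hi.
apply: (swap_E PA PC0 _ sw) => //.
- rewrite cC0 cA; move: hn; rewrite -leqNgt; lia.
- by rewrite cC0 li.
Qed.
End E2.


Section Main.
Variable X : finType.
Variable P : {set {set X}}.
Hypothesis hP : partition P [set: X].
Local Notation blk := (pblock P).
Implicit Types (f g h s : {ffun X -> X}).
Variables b c : nat -> {ffun X -> X}.
Hypothesis hb : forall i, i.+1 < nsizes P -> inB P i (b i).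
Hypothesis hc : forall i, i < nsizes P -> Cneeded P i -> inC P i (c i).
Local Notation Gen := (gen (GS P b c)).

Lemma HG h : tH P h -> Gen h.
Proof. move=> Hh; apply: (H_gen hP _ Hh) => z w wz zw; exact: (allE hP hb hc zw wz). Qed.

Lemma swap_all (A B : {set X}) (i r : X -> X) : A \in P -> B \in P -> A != B -> SWP P b c A B ->
  (forall u, u \in A -> i u \in B) -> (forall u, u \in B -> r u \in A) -> Gen (swapf A B i r).
Proof.
move=> PA PB nAB [w0 w0G [hA hinj him hid]] hi hr.
have AnB u : u \in A -> u \notin B := blk_disj hP PA PB nAB.
pose h' := [ffun y => if y \in B then (if [pick x in A | w0 x == y] is Some x then i x else y) else y].
pose h := [ffun x => if x \in B then (if [pick z in B | w0 z == r x] is Some z then z else x) else x].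
have Hh' : tH P h'.
  move=> y; rewrite ffunE; case: (boolP (y \in B)) => yB; last exact: blkP.
  rewrite (blk_def hP PB yB); case: pickP => [x /andP[xA _]|_ //]; exact: hi.
have Hh : tH P h.
  move=> y; rewrite ffunE; case: (boolP (y \in B)) => yB; last exact: blkP.
  by rewrite (blk_def hP PB yB); case: pickP => [x /andP[xB _]|].
have -> : swapf A B i r = fcomp h' (fcomp w0 h).
  apply/ffunP => x; rewrite !fcompE swapfE.
  case: (boolP (x \in A)) => xA.
    rewrite [h x]ffunE (negbTE (AnB _ xA)) ffunE hA //.
    case: pickP => [x' /andP[x'A /eqP e]|none]; first by rewrite (hinj _ _ x'A xA e).
    by have := none x; rewrite xA eqxx.
  case: (boolP (x \in B)) => xB.
    have rA := hr _ xB.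
    rewrite [h x]ffunE xB.
    case: pickP => [z /andP[zB /eqP e]|none].
      by rewrite e ffunE (negbTE (AnB _ rA)).
    by move: rA; rewrite -him => /imsetP[z zB ez]; have := none z; rewrite zB ez eqxx.
  by rewrite [h x]ffunE (negbTE xB) hid // ffunE (negbTE xB).
apply: GenC; first exact: HG.
by apply: GenC => //; exact: HG.
Qed.

Lemma swap_eq (A B : {set X}) : A \in P -> B \in P -> A != B -> #|A| = #|B| -> SWP P b c A B.
Proof.
move=> PA PB nAB e.
have [a aA] := blk_ne0 hP PA.
have [be [be' [h1 h2 h3 h4]]] := set_bij e (ex_intro _ a aA).
have AnB u : u \in A -> u \notin B := blk_disj hP PA PB nAB.
have nBA : B != A by rewrite eq_sym.
have BnA u : u \in B -> u \notin A := blk_disj hP PB PA nBA.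
exists (swapf A B be be'); first by apply: GenS; apply: swapf_S.
split.
- by move=> u uA; rewrite swapfE uA h1.
- by move=> u v uA vA; rewrite !swapfE uA vA => ev; rewrite -(h3 _ uA) ev h3.
- apply/setP => x; apply/imsetP/idP => [[u uB ->]|xA].
    by rewrite swapfE (negbTE (BnA _ uB)) uB h2.
  exists (be x); first exact: h1.
  by rewrite swapfE (negbTE (BnA _ (h1 _ xA))) h1 // h3.
- by move=> u uA uB; rewrite swapfE (negbTE uA) (negbTE uB).
Qed.

Lemma swap_comp (A B C : {set X}) : A \in P -> B \in P -> C \in P ->
  A != B -> A != C -> C != B -> #|A| <= #|C| -> #|C| <= #|B| ->
  SWP P b c C B -> SWP P b c A C -> SWP P b c A B.
Proof.
move=> PA PB PC nAB nAC nCB lAC lCB sCB sAC.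
have [a aA] := blk_ne0 hP PA.
have [cc ccC] := blk_ne0 hP PC.
have [iAC [rAC [a1 a2 a3]]] := set_sec lAC (ex_intro _ a aA).
have [iCB [rCB [c1 c2 c3]]] := set_sec lCB (ex_intro _ cc ccC).
have w1 := swap_all PC PB nCB sCB c1 c2.
have w2 := swap_all PA PC nAC sAC a1 a2.
have nBA : B != A by rewrite eq_sym.
have nCA : C != A by rewrite eq_sym.
have nBC : B != C by rewrite eq_sym.
have dAB u : u \in A -> u \notin B := blk_disj hP PA PB nAB.
have dAC u : u \in A -> u \notin C := blk_disj hP PA PC nAC.
have dBA u : u \in B -> u \notin A := blk_disj hP PB PA nBA.
have dBC u : u \in B -> u \notin C := blk_disj hP PB PC nBC.
have dCA u : u \in C -> u \notin A := blk_disj hP PC PA nCA.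
have dCB u : u \in C -> u \notin B := blk_disj hP PC PB nCB.
pose w := fcomp (swapf C B iCB rCB) (fcomp (swapf A C iAC rAC) (swapf C B iCB rCB)).
have wA u : u \in A -> w u = iCB (iAC u).
  move=> uA; rewrite !fcompE [swapf C B _ _ u]swapfE (negbTE (dAC _ uA)) (negbTE (dAB _ uA)).
  by rewrite [swapf A C _ _ u]swapfE uA swapfE a1.
have wB u : u \in B -> w u = rAC (rCB u).
  move=> uB; rewrite !fcompE [swapf C B _ _ u]swapfE (negbTE (dBC _ uB)) uB.
  have h := c2 _ uB.
  rewrite [swapf A C _ _ (rCB u)]swapfE (negbTE (dCA _ h)) h swapfE.
  have h' := a2 _ h.
  by rewrite (negbTE (dAC _ h')) (negbTE (dAB _ h')).
have wC u : u \in C -> w u = u.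
  move=> uC; rewrite !fcompE [swapf C B _ _ u]swapfE uC.
  have h := c1 _ uC.
  by rewrite [swapf A C _ _ (iCB u)]swapfE (negbTE (dBA _ h)) (negbTE (dBC _ h)) swapfE (negbTE (dBC _ h)) h c3.
have wO u : u \notin A -> u \notin B -> u \notin C -> w u = u.
  move=> uA uB uC; rewrite !fcompE [swapf C B _ _ u]swapfE (negbTE uB) (negbTE uC).
  by rewrite [swapf A C _ _ u]swapfE (negbTE uA) (negbTE uC) swapfE (negbTE uB) (negbTE uC).
exists w.
  by apply: GenC => //; apply: GenC.
split.
- by move=> u uA; rewrite wA // c1 // a1.
- move=> u v uA vA; rewrite !wA // => e.
  by rewrite -(a3 _ uA) -(c3 _ (a1 _ uA)) e c3 ?a3 // a1.
- apply/setP => x; apply/imsetP/idP => [[u uB ->]|xA].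
    by rewrite wB // a2 // c2.
  exists (iCB (iAC x)); first by apply: c1; apply: a1.
  by rewrite wB ?c1 ?a1 // c3 ?a3 // a1.
- move=> u uA uB; case: (boolP (u \in C)) => uC; first exact: wC.
  exact: wO.
Qed.
End Main.


Section Main2.
Variable X : finType.
Variable P : {set {set X}}.
Hypothesis hP : partition P [set: X].
Local Notation blk := (pblock P).
Implicit Types (f g h s : {ffun X -> X}).
Variables b c : nat -> {ffun X -> X}.
Hypothesis hb : forall i, i.+1 < nsizes P -> inB P i (b i).
Hypothesis hc : forall i, i < nsizes P -> Cneeded P i -> inC P i (c i).
Local Notation Gen := (gen (GS P b c)).

Lemma sizes_uniq : uniq (sizes P).
Proof. by rewrite sort_uniq undup_uniq. Qed.

Lemma index_l k : k < nsizes P -> index (l P k) (sizes P) = k.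
Proof. move=> hk; exact: index_uniq hk sizes_uniq. Qed.

Lemma swap_adj (A B : {set X}) : A \in P -> B \in P ->
  index #|B| (sizes P) = (index #|A| (sizes P)).+1 -> SWP P b c A B.
Proof.
move=> PA PB e.
have [hia lia] := sizes_idx PA; have [hib lib] := sizes_idx PB.
move: hib lib; rewrite e => hi lib.
move: hi lia lib; set ia := index #|A| (sizes P) => hi lia lib.
have [A0 [B0 [PA0 PB0 cA0 cB0 sw]]] := base_swap hP c hb hi.
have lt := sizes_lt (ltnSn _) hi.
have eA : #|A0| = #|A| by rewrite cA0 lia.
have eB : #|B0| = #|B| by rewrite cB0 lib.
have lAB : #|A| < #|B| by rewrite -lia -lib.
have nAB0 : A != B0 by apply: size_neq; rewrite eB neq_ltn lAB.
have nA0B0 : A0 != B0 by apply: size_neq; rewrite eB eA neq_ltn lAB.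
have sAB0 : SWP P b c A B0.
  case: (A =P A0) => [->//|/eqP nAA0].
  apply: (swap_comp hP hb hc PA PB0 PA0 nAB0 nAA0 nA0B0); rewrite ?eA ?eB ?(ltnW lAB) //.
  by apply: swap_eq.
case: (B0 =P B) => [<-//|/eqP nB0B].
have nAB : A != B by apply: size_neq; rewrite neq_ltn lAB.
apply: (swap_comp hP hb hc PA PB PB0 nAB nAB0 nB0B); rewrite ?eB ?(ltnW lAB) //.
by apply: swap_eq.
Qed.

Lemma swap_pairs (A B : {set X}) : A \in P -> B \in P -> A != B -> #|A| <= #|B| -> SWP P b c A B.
Proof.
move=> PA PB nAB le.
case: (#|A| =P #|B|) => [e|/eqP ne]; first exact: swap_eq.
have lt : #|A| < #|B| by rewrite ltn_neqAle ne le.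
have [hia lia] := sizes_idx PA; have [hib lib] := sizes_idx PB.
have iab : index #|A| (sizes P) < index #|B| (sizes P).
  have := sizes_mono hia hib; rewrite lia lib => /(_ le); rewrite leq_eqVlt => /orP[/eqP e|//].
  by move: ne; rewrite -lia -lib e eqxx.
suff H n : forall A B, A \in P -> B \in P ->
    index #|B| (sizes P) = index #|A| (sizes P) + n.+1 -> SWP P b c A B.
  apply: (H (index #|B| (sizes P) - (index #|A| (sizes P)).+1)) => //; lia.
elim: n => [|n IH] A' B' PA' PB' e.
  by apply: swap_adj => //; rewrite e addn1.
have [hia' lia'] := sizes_idx PA'; have [hib' lib'] := sizes_idx PB'.
set k := index #|A'| (sizes P) + n.+1.
have hk : k < nsizes P by rewrite /k; lia.
have [C PC cC] := sizes_ex hk.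
have iC : index #|C| (sizes P) = k by rewrite cC index_l.
have sAC : SWP P b c A' C by apply: IH => //; rewrite iC.
have sCB : SWP P b c C B' by apply: swap_adj => //; rewrite iC e /k; lia.
have l1 : #|A'| < #|C| by rewrite -lia' cC; apply: sizes_lt => //; rewrite /k; lia.
have l2 : #|C| < #|B'| by rewrite -lib' cC; apply: sizes_lt => //; rewrite e /k; lia.
apply: (swap_comp hP hb hc PA' PB' PC _ _ _ _ _ sCB sAC); rewrite ?(ltnW l1) ?(ltnW l2) //.
- apply: size_neq; rewrite neq_ltn; apply/orP; left; exact: ltn_trans l2.
- by apply: size_neq; rewrite neq_ltn l1.
- by apply: size_neq; rewrite neq_ltn l2.
Qed.
End Main2.


Section Main3.
Variable X : finType.
Variable P : {set {set X}}.
Hypothesis hP : partition P [set: X].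
Local Notation blk := (pblock P).
Implicit Types (f g h s : {ffun X -> X}).
Variables b c : nat -> {ffun X -> X}.
Hypothesis hb : forall i, i.+1 < nsizes P -> inB P i (b i).
Hypothesis hc : forall i, i < nsizes P -> Cneeded P i -> inC P i (c i).
Local Notation Gen := (gen (GS P b c)).

Definition Mset f := [set x | f x \notin blk x].

Lemma sig_gen f : tSig P f -> Gen f.
Proof.
have [n] := ubnP #|Mset f|; elim: n f => // n IH f hn fsig.
case: (set_0Vmem (Mset f)) => [M0|[x0]].
  apply: (HG hP hb hc) => x; apply/negPn/negP => nx.
  have : x \in Mset f by rewrite inE nx.
  by rewrite M0 inE.
rewrite inE => nx0.
set A := blk x0; set C := blk (f x0).
have PA : A \in P := blk_in hP x0.
have PC : C \in P := blk_in hP (f x0).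
have x0A : x0 \in A := blkP hP x0.
have fx0C : f x0 \in C := blkP hP (f x0).
have nAC : A != C by apply/eqP => e; move: nx0; rewrite -/A e fx0C.
have nCA : C != A by rewrite eq_sym.
have dAC u : u \in A -> u \notin C := blk_disj hP PA PC nAC.
have dCA u : u \in C -> u \notin A := blk_disj hP PC PA nCA.
have fAC x : x \in A -> f x \in C by move=> xA; exact: fsig.1.
have fCA x : f x \in C -> x \in A.
  move=> h; have e : blk (f x) = blk (f x0) by rewrite (blk_def hP PC h).
  by rewrite /A -(sig_inj hP fsig e) blkP.
case: (leqP #|C| #|A|) => le.
  have [io [ro [i1 r1 ir]]] := @set_sec _ C A le (ex_intro _ (f x0) fx0C).
  have sw := swap_pairs hP hb hc PC PA nCA le.
  have wG := swap_all hP hb hc PC PA nCA sw i1 r1.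
  pose hh := [ffun x => if x \in A then io (f x) else x].
  pose f' := [ffun x => if x \in A then f (ro x) else if x \in C then x else f x].
  have fE : f = fcomp f' (fcomp (swapf C A io ro) hh).
    apply/ffunP => x; rewrite !fcompE.
    case: (boolP (x \in A)) => xA.
      have fC := fAC _ xA; have iA := i1 _ fC.
      by rewrite [hh x]ffunE xA swapfE (negbTE (dAC _ iA)) iA ir // ffunE (negbTE (dCA _ fC)) fC.
    case: (boolP (x \in C)) => xC.
      have iA := i1 _ xC.
      by rewrite [hh x]ffunE (negbTE xA) swapfE xC ffunE iA ir.
    by rewrite [hh x]ffunE (negbTE xA) swapfE (negbTE xC) (negbTE xA) ffunE (negbTE xA) (negbTE xC).
  have Hh : tH P hh.
    move=> x; rewrite ffunE; case: (boolP (x \in A)) => xA; last exact: blkP.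
    rewrite (blk_def hP PA xA); apply: i1; exact: fAC.
  have f'T : tT P f'.
    move=> x y yx; rewrite !ffunE.
    case: (boolP (x \in A)) => xA.
      have yA : y \in A by rewrite (blk_memS hP PA yx).
      rewrite yA; apply: fsig.1; rewrite (blk_memE hP _ PC (r1 _ xA)); exact: r1.
    have yA : y \notin A by rewrite (blk_memS hP PA yx).
    rewrite (negbTE yA); case: (boolP (x \in C)) => xC.
      have yC : y \in C by rewrite (blk_memS hP PC yx).
      by rewrite yC (blk_memE hP _ PC xC).
    have yC : y \notin C by rewrite (blk_memS hP PC yx).
    rewrite (negbTE yC); exact: fsig.1.
  have f'sig : tSig P f'.
    split => // B PB; have [x fx] := fsig.2 B PB.
    by exists (fcomp (swapf C A io ro) hh x); rewrite -fcompE -fE.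
  have Msub : Mset f' \proper Mset f.
    apply/properP; split.
      apply/subsetP => x; rewrite !inE ffunE.
      case: (boolP (x \in A)) => xA.
        by move=> _; rewrite (blk_def hP PA xA); exact: dCA _ (fAC _ xA).
      by case: (boolP (x \in C)) => xC //; rewrite blkP.
    exists (f x0); rewrite !inE.
      rewrite (blk_def hP PC fx0C); apply/negP => h.
      by move: (dCA _ fx0C); rewrite fCA.
    by rewrite ffunE (negbTE (dCA _ fx0C)) fx0C blkP.
  rewrite fE; apply: GenC.
    apply: IH => //; have := proper_card Msub; lia.
  by apply: GenC => //; exact: (HG hP hb hc).
have [io [ro [i1 r1 ir]]] := @set_sec _ A C (ltnW le) (ex_intro _ x0 x0A).
have sw := swap_pairs hP hb hc PA PC nAC (ltnW le).
have wG := swap_all hP hb hc PA PC nAC sw i1 r1.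
pose f' := [ffun x => if x \in A then x else if f x \in A then io (f x) else f x].
pose hh := [ffun x => if x \in C then f (ro x) else x].
have fE : f = fcomp hh (fcomp (swapf A C io ro) f').
  apply/ffunP => x; rewrite !fcompE.
  case: (boolP (x \in A)) => xA.
    have iC := i1 _ xA.
    by rewrite [f' x]ffunE xA swapfE xA ffunE iC ir.
  case: (boolP (f x \in A)) => fA.
    have iC := i1 _ fA.
    by rewrite [f' x]ffunE (negbTE xA) fA swapfE (negbTE (dCA _ iC)) iC ir // ffunE (negbTE (dAC _ fA)).
  have fC : f x \notin C by apply: contraNN xA; exact: fCA.
  by rewrite [f' x]ffunE (negbTE xA) (negbTE fA) swapfE (negbTE fA) (negbTE fC) ffunE (negbTE fC).
have Hh : tH P hh.
  move=> x; rewrite ffunE; case: (boolP (x \in C)) => xC; last exact: blkP.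
  rewrite (blk_def hP PC xC); apply: fAC; exact: r1.
have f'T : tT P f'.
  move=> x y yx; rewrite !ffunE.
  case: (boolP (x \in A)) => xA.
    have yA : y \in A by rewrite (blk_memS hP PA yx).
    by rewrite yA.
  have yA : y \notin A by rewrite (blk_memS hP PA yx).
  rewrite (negbTE yA).
  have fyx := fsig.1 _ _ yx.
  case: (boolP (f x \in A)) => fxA.
    have fyA : f y \in A by rewrite (blk_memS hP PA fyx).
    rewrite fyA (blk_memE hP _ PC (i1 _ fxA)); exact: i1.
  have fyA : f y \notin A by rewrite (blk_memS hP PA fyx).
  by rewrite (negbTE fyA).
have f'sig : tSig P f'.
  split => // B PB.
  case: (B =P A) => [->|/eqP nBA]; first by exists x0; rewrite ffunE x0A.
  case: (B =P C) => [->|/eqP nBC].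
    have [y fy] := fsig.2 A PA.
    have yA : y \notin A.
      by apply/negP => yA; move: (dCA _ (fAC _ yA)); rewrite fy.
    by exists y; rewrite ffunE (negbTE yA) fy; exact: i1.
  have [y fy] := fsig.2 B PB.
  have fyA : f y \notin A := blk_disj hP PB PA nBA fy.
  have yA : y \notin A.
    apply/negP => yA; move: (blk_disj hP PB PC nBC fy); by rewrite fAC.
  by exists y; rewrite ffunE (negbTE yA) (negbTE fyA).
have Msub : Mset f' \proper Mset f.
  apply/properP; split.
    apply/subsetP => x; rewrite !inE ffunE.
    case: (boolP (x \in A)) => xA; first by rewrite blkP.
    case: (boolP (f x \in A)) => fA // _.
    by apply/negP => h; move: xA; rewrite -(blk_def hP PA fA) (blk_same hP h) blkP.
  exists x0; first by rewrite inE.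
  by rewrite inE ffunE x0A blkP.
rewrite fE; apply: GenC; first exact: (HG hP hb hc).
apply: GenC => //; apply: IH => //; have := proper_card Msub; lia.
Qed.
End Main3.


Theorem theorem4p6 (X : finType) (P : {set {set X}})
  (hP : partition P [set: X]) (hX : 0 < #|X|)
  (b c : nat -> {ffun X -> X})
  (hb : forall i, i.+1 < nsizes P -> inB P i (b i))
  (hc : forall i, i < nsizes P -> Cneeded P i -> inC P i (c i)) :
  forall f, inSigma P f <->
    gen (fun g => inS P g
                  \/ (exists2 i, i.+1 < nsizes P & g = b i)
                  \/ (exists i, [/\ i < nsizes P, Cneeded P i & g = c i])) f.
Proof.
move=> f; split.
  move/(inSigma_P hP) => fs; exact: (sig_gen hP hb hc fs).
move=> fg; apply/(inSigma_P hP); exact: (Gen_sig hP hb hc fg).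
Qed.
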